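(* Let $\mathbf R=\{R_i,t_i\}_{i\ge0}$ be a preperfectoid tower arising from a pair $(R,I_0)$ such that every $R_i$ is $I_0$-adically separated (i.e. $\bigcap_n I_0^nR_i=0$). Then every $t_i$ is injective and every $R_i$ is reduced.
   Context: Fix a prime $p$; rings are commutative with $1$. For a ring $A$, an ideal $I$ and an $A$-module $M$, $M_{I\text{-tor}}$ is the submodule of $x\in M$ such that for every $a\in I$ some $a^nx=0$; $\varphi_{I,A}\colon A_{I\text{-tor}}\to A/IA$ is inclusion followed by projection. $\varphi$ is absolute Frobenius. A tower of rings $\{R_i,t_i\}_{i\ge0}$ is a sequence of ring maps $R_0\xrightarrow{t_0}R_1\to\cdots$. For a ring $R$ and ideal $I_0$, write $\overline{R_i}=R_i/I_0R_i$, $\overline{t_i}$ the induced maps. A purely inseparable tower arising from $(R,I_0)$: (a) $R_0=R$, $p\in I_0$; (b) each $\overline{t_i}$ injective; (c) $\varphi(\overline{R_{i+1}})\subset\overline{t_i}(\overline{R_i})$; then $F_i\colon\overline{R_{i+1}}\to\overline{R_i}$ is the unique ring map with $\overline{t_i}\circ F_i=\varphi$. A preperfectoid tower is a purely inseparable tower with: (d) each $F_i$ surjective; (f) $I_0$ principal and a principal ideal $I_1\subset R_1$ with $I_1^p=I_0R_1$ and $\ker F_i=I_1\overline{R_{i+1}}$ for all $i$; (g) for all $i$, $I_0(R_i)_{I_0\text{-tor}}=0$ and a bijection $(F_i)_{\mathrm{tor}}\colon(R_{i+1})_{I_0\text{-tor}}\to(R_i)_{I_0\text{-tor}}$ with $\varphi_{I_0,R_i}\circ(F_i)_{\mathrm{tor}}=F_i\circ\varphi_{I_0,R_{i+1}}$.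 *)

(* Defs.v *)
From HB Require Import structures.
From mathcomp Require Import all_boot all_algebra.
Set Implicit Arguments. Unset Strict Implicit. Unset Printing Implicit Defensive.
Import GRing.Theory.
Local Open Scope ring_scope.

Section Tower.
Variables (R : nat -> comPzRingType) (t : forall i, {rmorphism R i -> R i.+1}).

Fixpoint from0 (i : nat) : R 0%N -> R i :=
  match i as n return R 0%N -> R n with
  | 0 => fun x => x
  | j.+1 => fun x => t j (from0 j x)
  end.

Fixpoint from1 (i : nat) : R 1%N -> R i.+1 :=
  match i as n return R 1%N -> R n.+1 with
  | 0 => fun x => x
  | j.+1 => fun x => t j.+1 (from1 j x)
  end.

Definition pdvd (A : comPzRingType) (a x : A) : Prop := exists y, x = a * y.

Variables (p : nat) (f0 : R 0%N).
(* I_0 = f0 * R_0 (principal); I_0 R_i = (fI i) * R_i *)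
Definition fI (i : nat) : R i := from0 i f0.

(* Frel y x  <->  F_i (class of y in R_{i+1}/I_0R_{i+1}) = class of x in R_i/I_0R_i,
   i.e. tbar_i (xbar) = (ybar)^p *)
Definition Frel (i : nat) (y : R i.+1) (x : R i) : Prop :=
  pdvd (fI i.+1) (t i x - y ^+ p).

Definition I0tor (i : nat) (x : R i) : Prop :=
  forall a : R 0%N, pdvd f0 a -> exists n, (from0 i a) ^+ n * x = 0.

Definition purely_inseparable : Prop :=
  [/\ pdvd f0 (p%:R : R 0%N),
      forall i (x : R i), pdvd (fI i.+1) (t i x) -> pdvd (fI i) x
    & forall i (y : R i.+1), exists x : R i, pdvd (fI i.+1) (y ^+ p - t i x)].

Definition preperfectoid : Prop :=
  [/\ purely_inseparable,
      forall i (x : R i), exists y : R i.+1, Frel y x,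
      (* (f) I_1 = g R_1 with I_1^p = I_0 R_1 and ker F_i = I_1 (R_{i+1}/I_0 R_{i+1}) *)
      exists g : R 1%N,
        [/\ pdvd (fI 1%N) (g ^+ p), pdvd (g ^+ p) (fI 1%N) &
            forall i (y : R i.+1),
              Frel y 0 <-> exists a b, y = from1 i g * a + fI i.+1 * b]
    &
      forall i,
        (forall (a : R 0%N) (x : R i), pdvd f0 a -> I0tor x -> from0 i a * x = 0) /\
        exists Ft : R i.+1 -> R i,
          [/\ forall y, I0tor y -> I0tor (Ft y),
              forall y1 y2, I0tor y1 -> I0tor y2 -> Ft y1 = Ft y2 -> y1 = y2,
              forall x, I0tor x -> exists2 y, I0tor y & Ft y = x
            & forall y, I0tor y -> Frel y (Ft y)]].

Definition I0_separated : Prop :=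
  forall i (x : R i), (forall n, pdvd (fI i ^+ n) x) -> x = 0.

End Tower.

(* Main.v *)
Require Import Defs.
From HB Require Import structures.
From mathcomp Require Import all_boot all_algebra.
From mathcomp Require Import ring.
Import GRing.Theory.
Local Open Scope ring_scope.

Lemma frob_add {A : comPzRingType} (p : nat) (x y : A) : prime p ->
  exists c, (x + y) ^+ p = x ^+ p + y ^+ p + p%:R * c.
Proof.
move=> hp; have p0 := prime_gt0 hp.
case: p hp p0 => [|q] // hp _.
rewrite exprDn big_ord_recr big_ord_recl /=.
exists (\sum_(i < q) x ^+ (q.+1 - (i.+1)) * y ^+ i.+1 *+ ('C(q.+1, i.+1) %/ q.+1)).
rewrite subn0 subnn bin0 binn !mulr1n expr0 mulr1 mul1r mulr_sumr.
rewrite -[LHS]addrA [X in _ + X = _]addrC addrA; congr (_ + _).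
apply: eq_bigr => i _ /=.
have hd : (q.+1 %| 'C(q.+1, i.+1))%N.
  by apply: prime_dvd_bin => //; rewrite /= ltnS ltn_ord.
rewrite /bump /= add1n.
rewrite -{1}(divnK hd) mulnC mulrnA -mulr_natl.
by rewrite mulr1 mulr_natl -!mulrnA mulnC.
Qed.

Section PD.
Variable A : comPzRingType.
Implicit Types a x y : A.
Lemma pdvd0 a : pdvd a 0. Proof. by exists 0; rewrite mulr0. Qed.
Lemma pdvdM a y : pdvd a (a * y). Proof. by exists y. Qed.
Lemma pdvd1 x : pdvd 1 x. Proof. by exists x; rewrite mul1r. Qed.
Lemma pdvdD a x y : pdvd a x -> pdvd a y -> pdvd a (x + y).
Proof. by move=> [u ->] [v ->]; exists (u + v); rewrite mulrDr. Qed.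
Lemma pdvdN a x : pdvd a x -> pdvd a (- x).
Proof. by move=> [u ->]; exists (- u); rewrite mulrN. Qed.
Lemma pdvdB a x y : pdvd a x -> pdvd a y -> pdvd a (x - y).
Proof. by move=> hx hy; apply: pdvdD => //; apply: pdvdN. Qed.
Lemma pdvdMr a x y : pdvd a x -> pdvd a (x * y).
Proof. by move=> [u ->]; exists (u * y); rewrite mulrA. Qed.
Lemma pdvdMl a x y : pdvd a x -> pdvd a (y * x).
Proof. by move=> h; rewrite mulrC; apply: pdvdMr. Qed.
Lemma pdvd_trans a b x : pdvd a b -> pdvd b x -> pdvd a x.
Proof. by move=> [u ->] [v ->]; exists (u * v); rewrite mulrA. Qed.
Lemma pdvd_eq a x y : x = y -> pdvd a x -> pdvd a y.
Proof. by move=> ->. Qed.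
End PD.
Arguments pdvd0 {A}. Arguments pdvdM {A}. Arguments pdvd1 {A}.
Arguments pdvdD {A a x y}. Arguments pdvdN {A a x}. Arguments pdvdB {A a x y}.
Arguments pdvdMr {A a x} y. Arguments pdvdMl {A a x} y. Arguments pdvd_trans {A a b x}.
Arguments pdvd_eq {A a x y}.

Lemma pdvd_rmorph (A B : comPzRingType) (h : {rmorphism A -> B}) a x :
  pdvd a x -> pdvd (h a) (h x).
Proof. by move=> [u ->]; exists (h u); rewrite rmorphM. Qed.

Section Tow.
Variables (R : nat -> comPzRingType) (t : forall i, {rmorphism R i -> R i.+1}).

Lemma from0_pd i a x : pdvd a x -> pdvd (from0 t i a) (from0 t i x).
Proof. elim: i => [//|i IH] /= h; exact: pdvd_rmorph (IH h). Qed.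
Lemma from0M i a b : from0 t i (a * b) = from0 t i a * from0 t i b.
Proof. by elim: i => [//|i IH] /=; rewrite IH rmorphM. Qed.
Lemma from0_nat i n : from0 t i n%:R = n%:R.
Proof. by elim: i => [//|i IH] /=; rewrite IH rmorph_nat. Qed.
Lemma from1_pd i a x : pdvd a x -> pdvd (from1 t i a) (from1 t i x).
Proof. elim: i => [//|i IH] /= h; exact: pdvd_rmorph (IH h). Qed.
Lemma from1X i x n : from1 t i (x ^+ n) = from1 t i x ^+ n.
Proof. by elim: i => [//|i IH] /=; rewrite IH rmorphXn. Qed.
Lemma from1_f f0 i : from1 t i (fI t f0 1) = fI t f0 i.+1.
Proof. by elim: i => [//|i IH] /=; rewrite IH. Qed.
End Tow.

Theorem corollary3p12 (p : nat) (hp : prime p)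
  (R : nat -> comPzRingType) (t : forall i, {rmorphism R i -> R i.+1}) (f0 : R 0%N) :
  preperfectoid t p f0 -> I0_separated t f0 ->
  (forall i, injective (t i)) /\ (forall i (x : R i) (n : nat), x ^+ n = 0 -> x = 0).
Proof.
case: p hp => [|[|q]] // hp.
move=> [[ha hb hc] hd [g [hgf hfg hker]] hg] hsep.
pose f := fI t f0.
pose G i := from1 t i g.
have hb' : forall i (x : R i), pdvd (f i.+1) (t i x) -> pdvd (f i) x := hb.
have hk : forall i (y : R i.+1), pdvd (f i.+1) (y ^+ q.+2) ->
    exists a b, y = G i * a + f i.+1 * b.
  move=> i y h; apply/(hker i y); rewrite /Frel rmorph0 sub0r; exact: pdvdN h.
have hpf i : pdvd (f i) (q.+2%:R : R i).
  by rewrite -(from0_nat _ t i q.+2); apply: from0_pd.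
have frob i (x y : R i) : pdvd (f i) ((x + y) ^+ q.+2 - x ^+ q.+2 - y ^+ q.+2).
  have [c ->] := frob_add q.+2 x y hp.
  apply: (pdvd_eq (x := q.+2%:R * c)); first by ring.
  exact: pdvdMr (hpf i).
have frobB i (x y : R i) : pdvd (f i) ((x - y) ^+ q.+2 - (x ^+ q.+2 - y ^+ q.+2)).
  have h := frob i (x - y) y; rewrite subrK in h.
  apply: (pdvd_eq _ (pdvdN h)); ring.
have kill i (x : R i) : I0tor t f0 x -> f i * x = 0.
  by move=> hx; apply: (hg i).1 => //; exists 1; rewrite mulr1.
have torK i (x : R i) n : f i ^+ n * x = 0 -> I0tor t f0 x.
  move=> h a [c ->]; exists n.
  rewrite from0M; change (from0 t i f0) with (f i).
  by rewrite exprMn mulrAC h mul0r.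
have tor1 i (x : R i) : f i * x = 0 -> I0tor t f0 x.
  by move=> h; apply: (torK i x 1); rewrite expr1.
have hFt i : exists Ft : R i.+1 -> R i,
   [/\ forall y, f i.+1 * y = 0 -> f i * Ft y = 0,
       forall y1 y2, f i.+1 * y1 = 0 -> f i.+1 * y2 = 0 -> Ft y1 = Ft y2 -> y1 = y2,
       forall x, f i * x = 0 -> exists2 y, f i.+1 * y = 0 & Ft y = x
     & forall y, f i.+1 * y = 0 -> pdvd (f i.+1) (t i (Ft y) - y ^+ q.+2)].
  have [_ [Ft [F1 F2 F3 F4]]] := hg i.
  exists Ft; split.
  - by move=> y hy; apply: kill; apply: F1; apply: tor1.
  - by move=> y1 y2 h1 h2; apply: F2; apply: tor1.
  - move=> x hx; have [y ty ey] := F3 x (tor1 _ _ hx).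
    by exists y => //; apply: kill.
  - by move=> y hy; apply: F4; apply: tor1.
have TfR i (x : R i) : f i * x = 0 -> pdvd (f i) x -> x = 0.
  move=> h0 [z hz].
  have h2 : f i ^+ 2 * z = 0 by rewrite expr2 -mulrA -hz.
  by rewrite hz; apply: kill; apply: (torK i z 2).
have Tred i (y : R i.+1) : f i.+1 * y = 0 -> y ^+ q.+2 = 0 -> y = 0.
  move=> hy hyp; have [Ft [F1 F2 F3 F4]] := hFt i.
  have e1 : Ft y = 0.
    apply: TfR; first exact: F1.
    by apply: hb'; have := F4 y hy; rewrite hyp subr0.
  have e0 : Ft 0 = 0.
    apply: TfR; first by apply: F1; rewrite mulr0.
    by apply: hb'; have := F4 0 (mulr0 _); rewrite expr0n /= subr0.
  by apply: F2 => //; [rewrite mulr0 | rewrite e1 e0].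
have hGf i : exists a, G i ^+ q.+2 = f i.+1 * a.
  have := from1_pd _ t i _ _ hgf; rewrite from1X from1_f.
  by case=> a ha'; exists a.
have hfG i : exists b, f i.+1 = G i ^+ q.+2 * b.
  have := from1_pd _ t i _ _ hfg; rewrite from1X from1_f.
  by case=> a ha'; exists a.
have gT i (y : R i.+1) : f i.+1 * y = 0 -> G i * y = 0.
  move=> hy; apply: Tred; first by rewrite mulrCA hy mulr0.
  have [a ha'] := hGf i.
  rewrite exprMn ha'.
  have -> : f i.+1 * a * y ^+ q.+2 = a * y ^+ q.+1 * (f i.+1 * y).
    by rewrite exprS; ring.
  by rewrite hy mulr0.
have tG i : t i.+1 (G i) = G i.+1 by [].
have L i (y : R i.+1) (m r : R i.+2) : f i.+2 * m = 0 ->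
    pdvd (f i.+2) (t i.+1 y - m - G i.+1 * r) ->
    exists tau e, f i.+1 * tau = 0 /\ y = tau + G i * e.
  move=> hm hy.
  have gm : G i.+1 * m = 0 := gT i.+1 m hm.
  have [a ha'] := hGf i.+1.
  have h1 : pdvd (f i.+2) (t i.+1 (G i ^+ q.+1 * y)).
    rewrite rmorphM rmorphXn tG.
    apply: (pdvd_eq (x := G i.+1 ^+ q.+1 * (t i.+1 y - m - G i.+1 * r)
        + G i.+1 ^+ q * (G i.+1 * m) + G i.+1 ^+ q.+2 * r)).
      by rewrite !exprS; ring.
    apply: pdvdD; first apply: pdvdD.
    - exact: pdvdMl hy.
    - by rewrite gm mulr0; apply: pdvd0.
    - by rewrite ha'; apply: pdvdMr; apply: pdvdM.
  have [w hw] := hb' _ _ h1.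
  have [b hb2] := hfG i.
  exists (y - G i * (b * w)), (b * w); split; last by rewrite subrK.
  rewrite hb2.
  have -> : G i ^+ q.+2 * b * (y - G i * (b * w)) =
      G i * b * (G i ^+ q.+1 * y - G i ^+ q.+2 * b * w).
    by rewrite !exprS; ring.
  by rewrite hw hb2 subrr mulr0.
have A' i (z u : R i.+1) : f i.+1 * u = 0 -> pdvd (f i.+1) (z ^+ q.+2 - u) ->
    exists tau e, f i.+1 * tau = 0 /\ z = tau + G i * e.
  move=> hu hz.
  have [Ft [F1 F2 F3 F4]] := hFt i.+1.
  have [m fm em] := F3 u hu.
  have hF := F4 m fm; rewrite em in hF.
  have h1 : pdvd (f i.+2) ((t i.+1 z - m) ^+ q.+2).
    apply: (pdvd_eq (x := ((t i.+1 z - m) ^+ q.+2 - (t i.+1 z ^+ q.+2 - m ^+ q.+2))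
        + t i.+1 (z ^+ q.+2 - u) + (t i.+1 u - m ^+ q.+2))).
      by rewrite rmorphB rmorphXn; ring.
    apply: pdvdD; first apply: pdvdD.
    - exact: frobB.
    - exact: pdvd_rmorph (t i.+1) _ _ hz.
    - exact: hF.
  have [a [b hab]] := hk i.+1 _ h1.
  apply: (L i z m a fm).
  apply: (pdvd_eq (x := f i.+2 * b)); last exact: pdvdM.
  by rewrite hab; ring.
have B i (x : R i) (u : R i.+1) : f i.+1 * u = 0 -> pdvd (f i.+1) (t i x - u) ->
    exists tau, f i * tau = 0 /\ pdvd (f i) (x - tau).
  move=> hu hx.
  have [y hy] := hd i x.
  have hy' : pdvd (f i.+1) (t i x - y ^+ q.+2) := hy.
  have hyu : pdvd (f i.+1) (y ^+ q.+2 - u).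
    apply: (pdvd_eq (x := (t i x - u) - (t i x - y ^+ q.+2))); first by ring.
    exact: pdvdB.
  have [s [e [hs ey]]] := A' i y u hu hyu.
  rewrite ey in hy'.
  have [Ft [F1 F2 F3 F4]] := hFt i.
  exists (Ft s); split; first exact: F1.
  apply: hb'.
  have [a ha'] := hGf i.
  apply: (pdvd_eq (x := (t i x - (s + G i * e) ^+ q.+2)
      + ((s + G i * e) ^+ q.+2 - s ^+ q.+2 - (G i * e) ^+ q.+2)
      + G i ^+ q.+2 * e ^+ q.+2 - (t i (Ft s) - s ^+ q.+2))).
    by rewrite rmorphB exprMn; ring.
  apply: pdvdB; last exact: F4.
  apply: pdvdD; first apply: pdvdD.
  - exact: hy'.
  - exact: frob.
  - by rewrite ha'; apply: pdvdMr; apply: pdvdM.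
have It i n (x : R i) : f i.+1 * t i x = 0 ->
    exists tau, f i * tau = 0 /\ pdvd (f i ^+ n) (x - tau).
  elim: n x => [|n IH] x hx.
    by exists 0; split; [rewrite mulr0 | rewrite expr0; apply: pdvd1].
  have [tau [ht [w hw]]] := B i x (t i x) hx (pdvd_eq (esym (subrr _)) (pdvd0 _)).
  have hw2 : f i.+1 * t i w = 0.
    have e1 : f i.+1 * t i w = t i (x - tau) by rewrite hw rmorphM.
    have e2 : f i.+1 * t i tau = 0.
      by rewrite -[f i.+1]/(t i (f i)) -rmorphM ht rmorph0.
    have h2 : f i.+1 ^+ 2 * t i w = 0.
      by rewrite expr2 -mulrA e1 rmorphB mulrBr hx e2 subrr.
    exact: kill _ _ (torK _ _ 2 h2).
  have [tau' [ht' [c hc2]]] := IH w hw2.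
  exists tau; split => //; exists c.
  by rewrite hw -(subrK tau' w) mulrDr ht' addr0 hc2 exprS mulrA.
have Inj i : injective (t i).
  move=> x y hxy; apply/eqP; rewrite -subr_eq0; apply/eqP.
  have tz : t i (x - y) = 0 by rewrite rmorphB hxy subrr.
  have fz : f i * (x - y) = 0.
    apply: (hsep i) => n.
    have hz : f i.+1 * t i (x - y) = 0 by rewrite tz mulr0.
    have [tau [ht [c hc2]]] := It i n (x - y) hz.
    exists (f i * c).
    by rewrite -(subrK tau (x - y)) mulrDr ht addr0 hc2 mulrCA.
  apply: TfR fz _; apply: hb'; rewrite tz; exact: pdvd0.
have Red1 i (y : R i.+1) : y ^+ q.+2 = 0 -> y = 0.
  move=> hy.
  have hG : forall k, pdvd (G i ^+ k) y.
    elim=> [|k IH]; first by rewrite expr0; apply: pdvd1.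
    case: k IH => [|k] IH.
      have hy0 : pdvd (f i.+1) (y ^+ q.+2) by rewrite hy; apply: pdvd0.
      have [a [b ->]] := hk i y hy0.
      have [c hc3] := hfG i.
      rewrite hc3; exists (a + G i ^+ q.+1 * c * b).
      by rewrite !exprS; ring.
    case: IH => w hw.
    have [c hc3] := hfG i.
    have e : f i.+1 ^+ k.+1 * w ^+ q.+2 = c ^+ k.+1 * y ^+ q.+2.
      rewrite hw hc3 exprMn [(G i ^+ k.+1 * w) ^+ _]exprMn [(G i ^+ k.+1) ^+ q.+2]exprAC; ring.
    have hw1 : f i.+1 * w ^+ q.+2 = 0.
      by apply: kill; apply: (torK _ _ k.+1); rewrite e hy mulr0.
    have [s [e' [hs ews]]] := A' i w (w ^+ q.+2) hw1 (pdvd_eq (esym (subrr _)) (pdvd0 _)).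
    exists e'.
    rewrite hw ews mulrDr exprS mulrAC (gT i s hs) mul0r add0r.
    by rewrite !exprS; ring.
  apply: (hsep i.+1) => n.
  have [a ha'] := hGf i.
  apply: (pdvd_trans _ (hG (q.+2 * n)%N)).
  by rewrite exprM ha' exprMn; apply: pdvdM.
have Redp i (x : R i) : x ^+ q.+2 = 0 -> x = 0.
  move=> hx; apply: (Inj i); rewrite rmorph0; apply: Red1.
  by rewrite -rmorphXn hx rmorph0.
split; first exact: Inj.
move=> i x n hx.
have hpk : forall k, x ^+ (q.+2 ^ k) = 0 -> x = 0.
  elim=> [|k IH] h; first by rewrite expn0 expr1 in h.
  by apply: IH; apply: Redp; rewrite -exprM -expnSr.
apply: (hpk n).
have le : (n <= q.+2 ^ n)%N by apply: ltnW; apply: ltn_expl.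
by rewrite -(subnK le) exprD hx mulr0.
Qed.
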